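(* There is an absolute constant $c>0$ such that the following holds. Let $v_1,\dots,v_n$ be distinct non-negative integers, $s_1,\dots,s_n\in[0,1)$, and $f(x):=\sum_{i=1}^n e^{2\pi\imath s_i}x^{v_i}$. Then for every $t\in\mathbb{R}$, $$B(s_1+v_1t,\dots,s_n+v_nt)\ \le\ c\Big(1+\sum_{k=1}^n\frac{|f^{(k)}|_m}{k}\Big).$$
   Context: For $r\in\mathbb{R}$, $\{r\}:=r-\lfloor r\rfloor$. The bias is $B(r_1,\dots,r_n):=\sup_{0\le a\le b\le1}\big|\,|\{i:\{r_i\}\in[a,b]\}|-n(b-a)\big|$. For a complex polynomial $g(x)=\sum_i a_ix^i$, $|g|_m:=\max_{|x|=1}|g(x)|$ (maximum over the unit circle), and for a positive integer $k$, the Hadamard power is $g^{(k)}(x):=\sum_i a_i^kx^i$. *)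

(* Defs.v *)
From Stdlib Require Import Reals.
Open Scope R_scope.

Fixpoint rsum (n : nat) (F : nat -> R) : R :=
  match n with
  | O => 0
  | S m => rsum m F + F m
  end.

(* {r} = r - floor r  (Stdlib: frac_part r = r - IZR (Int_part r), Int_part = floor) *)
Definition fracR (r : R) : R := frac_part r.

Fixpoint count_in (n : nat) (r : nat -> R) (a b : R) : nat :=
  match n with
  | O => O
  | S m => (count_in m r a b +
            (if Rle_dec a (fracR (r m)) then
               if Rle_dec (fracR (r m)) b then 1 else 0
             else 0))%nat
  end.

(* The set whose supremum is the bias B(r_0,...,r_{n-1}). *)
Definition bias_set (n : nat) (r : nat -> R) : R -> Prop :=
  fun x => exists a b : R, 0 <= a /\ a <= b /\ b <= 1 /\
    x = Rabs (INR (count_in n r a b) - INR n * (b - a)).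

(* Modulus of f^(k)(x) at x = e^{2 pi i theta}, where
   f(x) = sum_{i<n} e^{2 pi i s_i} x^{v_i}, so
   f^(k)(x) = sum_{i<n} e^{2 pi i k s_i} x^{v_i}
   and f^(k)(e^{2 pi i theta}) = sum_i e^{2 pi i (k s_i + v_i theta)}. *)
Definition hadamard_mod (n : nat) (v : nat -> nat) (s : nat -> R) (k : nat)
  (theta : R) : R :=
  sqrt ( (rsum n (fun i => cos (2 * PI * (INR k * s i + INR (v i) * theta)))) ^ 2
       + (rsum n (fun i => sin (2 * PI * (INR k * s i + INR (v i) * theta)))) ^ 2 ).

(* The set of values |f^(k)(x)|, |x| = 1; its supremum (= maximum) is |f^(k)|_m. *)
Definition hadamard_mod_set (n : nat) (v : nat -> nat) (s : nat -> R) (k : nat)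
  : R -> Prop :=
  fun y => exists theta : R, y = hadamard_mod n v s k theta.

(* Main.v *)
Require Import Defs.
From Stdlib Require Import Reals Lra Lia Arith ZArith.
From Coquelicot Require Import Coquelicot.
Open Scope R_scope.

Lemma rsum_ext n f g : (forall i, (i < n)%nat -> f i = g i) -> rsum n f = rsum n g.
Proof. induction n; intros H; simpl; auto. rewrite IHn by (intros; apply H; lia). rewrite H by lia. auto. Qed.

Lemma rsum_le n f g : (forall i, (i < n)%nat -> f i <= g i) -> rsum n f <= rsum n g.
Proof. induction n; intros H; simpl. lra. assert (H1 := H n (Nat.lt_succ_diag_r n)). 
  assert (rsum n f <= rsum n g) by (apply IHn; intros; apply H; lia). lra. Qed.

Lemma rsum_plus n f g : rsum n (fun i => f i + g i) = rsum n f + rsum n g.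
Proof. induction n; simpl. lra. rewrite IHn. lra. Qed.

Lemma rsum_minus n f g : rsum n (fun i => f i - g i) = rsum n f - rsum n g.
Proof. induction n; simpl. lra. rewrite IHn. lra. Qed.

Lemma rsum_scal n c f : c * rsum n f = rsum n (fun i => c * f i).
Proof. induction n; simpl. lra. rewrite <- IHn. lra. Qed.

Lemma rsum_const n c : rsum n (fun _ => c) = INR n * c.
Proof. induction n. simpl; lra. change (rsum (S n) (fun _ => c)) with (rsum n (fun _ => c) + c). rewrite IHn, S_INR; lra. Qed.

Lemma rsum_abs n f : Rabs (rsum n f) <= rsum n (fun i => Rabs (f i)).
Proof. induction n; simpl. rewrite Rabs_R0; lra.
  eapply Rle_trans. apply Rabs_triang. lra. Qed.

Lemma rsum_nonneg n f : (forall i, (i < n)%nat -> 0 <= f i) -> 0 <= rsum n f.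
Proof. intros H. replace 0 with (rsum n (fun _ => 0)). apply rsum_le; auto.
  rewrite rsum_const; lra. Qed.

Lemma rsum_swap n m f : rsum n (fun i => rsum m (fun j => f i j)) = rsum m (fun j => rsum n (fun i => f i j)).
Proof. induction n; simpl. induction m; simpl; lra.
  rewrite IHn. rewrite <- rsum_plus. auto. Qed.

Lemma rsum_mult n m f g : rsum n f * rsum m g = rsum n (fun i => rsum m (fun j => f i * g j)).
Proof. rewrite Rmult_comm, rsum_scal. apply rsum_ext. intros i _. rewrite Rmult_comm, rsum_scal. auto. Qed.

Lemma rsum_diag n f j : (j < n)%nat -> rsum n f = f j + rsum n (fun l => if Nat.eq_dec l j then 0 else f l).
Proof. induction n; intros H; simpl. lia.
  destruct (Nat.eq_dec n j). subst. replace (rsum j (fun l => if Nat.eq_dec l j then 0 else f l)) with (rsum j f). lra.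
  apply rsum_ext; intros; destruct (Nat.eq_dec i j); auto; lia.
  rewrite IHn by lia. lra. Qed.

Lemma rsum_shift n f : rsum (S n) f = f 0%nat + rsum n (fun i => f (S i)).
Proof. induction n. simpl. lra. change (rsum (S (S n)) f) with (rsum (S n) f + f (S n)). rewrite IHn. simpl. lra. Qed.

Lemma rsum_rev j g : rsum j (fun l => g (j - l)%nat) = rsum j (fun d => g (S d)).
Proof. revert g. induction j; intros g. auto.
  change (rsum (S j) (fun l => g (S j - l)%nat)) with (rsum j (fun l => g (S j - l)%nat) + g (S j - j)%nat).
  replace (S j - j)%nat with 1%nat by lia.
  transitivity (rsum j (fun d => g (S (S d))) + g 1%nat).
  - f_equal. rewrite <- (IHj (fun x => g (S x))). apply rsum_ext. intros. f_equal. lia.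
  - rewrite (rsum_shift j (fun d => g (S d))). simpl. 
    replace (rsum j (fun d => g (S (S d))) + g 1%nat) with (g 1%nat + rsum j (fun d => g (S (S d)))) by lra.
    rewrite <- (rsum_shift j (fun d => g (S d))). auto. Qed.

Lemma rsum_mono_len n m f : (forall i, 0 <= f i) -> (n <= m)%nat -> rsum n f <= rsum m f.
Proof. intros H Hnm. induction Hnm. lra. simpl. specialize (H m). lra. Qed.

Lemma rsum_exists_ge n f c : (0 < n)%nat -> INR n * c <= rsum n f -> exists i, (i < n)%nat /\ c <= f i.
Proof. induction n; intros Hn H. lia. destruct (Rle_dec c (f n)). exists n; split; auto.
  destruct n. simpl in H. lra. destruct (IHn ltac:(lia)) as [i [Hi Hc]].
  change (rsum (S (S n)) f) with (rsum (S n) f + f (S n)) in H. rewrite S_INR in H. lra. exists i; split; auto. Qed.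

Lemma argmax_ex L f : (0 < L)%nat -> exists m0, (m0 < L)%nat /\ forall m, (m < L)%nat -> f m <= f m0.
Proof. induction L; intros H. lia. destruct L. exists 0%nat. split. lia. intros m Hm. assert (m = 0)%nat by lia. subst. lra.
  destruct (IHL ltac:(lia)) as [m0 [H0 H1]]. destruct (Rle_dec (f (S L)) (f m0)).
  exists m0. split. lia. intros m Hm. destruct (Nat.eq_dec m (S L)). subst; auto. apply H1; lia.
  exists (S L). split. lia. intros m Hm. destruct (Nat.eq_dec m (S L)). subst; lra. specialize (H1 m ltac:(lia)). lra. Qed.

Lemma argmin_ex L f : (0 < L)%nat -> exists m0, (m0 < L)%nat /\ forall m, (m < L)%nat -> f m0 <= f m.
Proof. intros H. destruct (argmax_ex L (fun m => - f m) H) as [m0 [H0 H1]]. exists m0. split; auto.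
  intros m Hm. specialize (H1 m Hm). lra. Qed.

Notation CC := Complex.C.
Definition ex (a : R) : CC := (cos a, sin a).
Fixpoint csum (n : nat) (f : nat -> CC) : CC :=
  match n with O => RtoC 0 | S m => Cplus (csum m f) (f m) end.

Lemma ceq (x y : CC) : fst x = fst y -> snd x = snd y -> x = y.
Proof. destruct x, y; simpl; intros; subst; auto. Qed.

Lemma ex_add a b : ex (a + b) = Cmult (ex a) (ex b).
Proof. apply ceq; simpl; [rewrite cos_plus | rewrite sin_plus]; ring. Qed.

Lemma ex_0 : ex 0 = RtoC 1.
Proof. apply ceq; simpl; [rewrite cos_0 | rewrite sin_0]; auto. Qed.

Lemma ex_pow a k : Cpow (ex a) k = ex (INR k * a).
Proof. induction k. simpl. rewrite Rmult_0_l, ex_0. auto.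
  simpl Cpow. rewrite IHk, <- ex_add. f_equal. rewrite S_INR. ring. Qed.

Lemma ex_int k : ex (2 * PI * INR k) = RtoC 1.
Proof. apply ceq; simpl. replace (2*PI*INR k) with (0 + 2 * INR k * PI) by ring. rewrite cos_period, cos_0. auto.
  replace (2*PI*INR k) with (0 + 2 * INR k * PI) by ring. rewrite sin_period, sin_0. auto. Qed.

Lemma ex_neg a : Cmult (ex (- a)) (ex a) = RtoC 1.
Proof. rewrite <- ex_add. replace (-a + a) with 0 by ring. apply ex_0. Qed.

Lemma ex_conj a : Cconj (ex a) = ex (- a).
Proof. apply ceq; simpl. rewrite cos_neg; auto. rewrite sin_neg; auto. Qed.

Lemma Cmod_ex a : Cmod (ex a) = 1.
Proof. unfold Cmod, ex. cbv [fst snd]. replace (cos a ^ 2 + sin a ^ 2) with 1. apply sqrt_1.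
  pose proof (sin2_cos2 a). unfold Rsqr in H. nra. Qed.

Lemma Cmod_sq (x : CC) : Cmod x ^ 2 = fst x ^ 2 + snd x ^ 2.
Proof. unfold Cmod. rewrite pow2_sqrt. auto. apply Rplus_le_le_0_compat; apply pow2_ge_0. Qed.

Lemma Cmod_ex1_sq a : Cmod (Cminus (ex a) (RtoC 1)) ^ 2 = 2 - 2 * cos a.
Proof. rewrite Cmod_sq. simpl. pose proof (sin2_cos2 a). unfold Rsqr in H. nra. Qed.

Lemma csum_fst n f : fst (csum n f) = rsum n (fun i => fst (f i)).
Proof. induction n; simpl; auto. rewrite IHn; auto. Qed.
Lemma csum_snd n f : snd (csum n f) = rsum n (fun i => snd (f i)).
Proof. induction n; simpl; auto. rewrite IHn; auto. Qed.

Lemma csum_ext n f g : (forall i, (i < n)%nat -> f i = g i) -> csum n f = csum n g.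
Proof. induction n; intros H; simpl; auto. rewrite IHn by (intros; apply H; lia). rewrite H by lia. auto. Qed.

Lemma Cmod_csum n f : Cmod (csum n f) <= rsum n (fun i => Cmod (f i)).
Proof. induction n; simpl. rewrite Cmod_0; lra. eapply Rle_trans. apply Cmod_triangle. lra. Qed.

Lemma csum_scal n c f : Cmult c (csum n f) = csum n (fun i => Cmult c (f i)).
Proof. induction n; simpl. apply ceq; simpl; ring. rewrite <- IHn. apply ceq; simpl; ring. Qed.

Lemma csum_plus n f g : csum n (fun i => Cplus (f i) (g i)) = Cplus (csum n f) (csum n g).
Proof. induction n; simpl. apply ceq; simpl; ring. rewrite IHn. apply ceq; simpl; ring. Qed.

Lemma csum_RtoC n f : RtoC (rsum n f) = csum n (fun i => RtoC (f i)).
Proof. induction n; simpl; auto. rewrite <- IHn. apply ceq; simpl; ring. Qed.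

Lemma csum_swap n m f : csum n (fun i => csum m (fun j => f i j)) = csum m (fun j => csum n (fun i => f i j)).
Proof. induction n; simpl. induction m; simpl; auto. rewrite <- IHm. apply ceq; simpl; ring.
  rewrite IHn. rewrite <- csum_plus. auto. Qed.

Lemma csum_conj n f : Cconj (csum n f) = csum n (fun i => Cconj (f i)).
Proof. induction n; simpl. apply ceq; simpl; ring. rewrite <- IHn. apply ceq; simpl; ring. Qed.

Lemma csum_zero n : csum n (fun _ => RtoC 0) = RtoC 0.
Proof. induction n; simpl; auto. rewrite IHn. apply ceq; simpl; ring. Qed.

Open Scope C_scope.
Lemma geom q n : (q - 1) * csum n (fun m => q ^ m) = q ^ n - 1.
Proof. induction n; simpl. apply ceq; simpl; ring.
  transitivity ((q - 1) * csum n (fun m => q ^ m) + (q-1) * q^n). ring. rewrite IHn. ring. Qed.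

Lemma geom_tail q n a : (a <= n)%nat ->
  (q - 1) * csum n (fun m => if le_dec a m then q ^ m else 0) = q ^ n - q ^ a.
Proof. induction n; intros H. assert (a = 0)%nat by lia. subst. simpl. apply ceq; simpl; ring.
  destruct (Nat.eq_dec a (S n)). subst.
  replace (csum (S n) (fun m => if le_dec (S n) m then q ^ m else 0)) with (RtoC 0). ring.
  symmetry. transitivity (csum (S n) (fun _ => RtoC 0)). apply csum_ext. intros. destruct (le_dec (S n) i); auto. lia.
  apply csum_zero.
  simpl csum. transitivity ((q - 1) * csum n (fun m => if le_dec a m then q ^ m else 0) + (q-1) * (if le_dec a n then q ^ n else 0)). ring.
  rewrite IHn by lia. destruct (le_dec a n). simpl. ring. lia. Qed.

Lemma geom_lin q n : (q - 1) * (q - 1) * csum n (fun m => RtoC (INR m) * q ^ m)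
   = RtoC (INR n) * q ^ (S n) - RtoC (INR n) * q ^ n - q ^ (S n) + q.
Proof. induction n. simpl. apply ceq; simpl; ring.
  simpl csum. transitivity ((q - 1) * (q - 1) * csum n (fun m => RtoC (INR m) * q ^ m) + (q-1)*(q-1)*(RtoC (INR n) * q ^ n)). ring.
  rewrite IHn. rewrite S_INR. simpl Cpow. 
  replace (RtoC (INR n + 1)) with (RtoC (INR n) + 1). ring. apply ceq; simpl; ring. Qed.
Close Scope C_scope.

Lemma PI_gt3 : 3 < PI.
Proof. pose proof PI2_3_2. lra. Qed.

Lemma sin_le_pos y : 0 < y -> -y <= sin y <= y.
Proof. intros H. split. destruct (Rle_dec 1 y). pose proof (SIN_bound y). lra.
  assert (0 < sin y) by (apply sin_gt_0; pose proof PI_gt3; lra). lra.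
  pose proof (sin_lt_x y H). lra. Qed.

Lemma sin_sq_le y : sin y ^ 2 <= y ^ 2.
Proof. destruct (Rtotal_order y 0) as [H|[H|H]].
  - pose proof (sin_le_pos (-y) ltac:(lra)). rewrite sin_neg in H0. nra.
  - subst. rewrite sin_0. lra.
  - pose proof (sin_le_pos y H). nra. Qed.

Lemma cos_lb t : 1 - t ^ 2 / 2 <= cos t.
Proof. assert (E : cos t = 1 - 2 * sin (t/2) * sin (t/2)) by (rewrite <- cos_2a_sin; f_equal; field).
  rewrite E. pose proof (sin_sq_le (t/2)). nra. Qed.

Lemma cos_ub a : - PI / 2 <= a -> a <= PI / 2 -> cos a <= 1 - a^2/2 + a^4/24.
Proof. intros H1 H2. destruct (cos_bound a 0 H1 H2) as [_ H].
  unfold cos_approx, cos_term in H. simpl in H. unfold INR in H. simpl in H. lra. Qed.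

Lemma two_cos_lb t : Rabs t <= PI / 2 -> t ^ 2 / 2 <= 2 - 2 * cos t.
Proof. intros H. assert (H1 : - PI / 2 <= t <= PI/2) by (apply Rabs_le_between in H; lra).
  pose proof (cos_ub t ltac:(lra) ltac:(lra)). pose proof PI_4.
  assert (t ^ 2 <= 4). { assert (-2 <= t <= 2) by lra. nra. }
  assert (t ^ 4 = t^2 * t^2) by ring. pose proof (pow2_ge_0 t). nra. Qed.

Lemma Cmod_exdiff a b : Cmod (Cminus (ex a) (ex b)) <= Rabs (a - b).
Proof. assert (E : Cminus (ex a) (ex b) = Cmult (ex b) (Cminus (ex (a - b)) (RtoC 1))).
  { rewrite Cmult_comm. unfold Cminus. rewrite Cmult_plus_distr_r. rewrite <- ex_add.
    replace (a - b + b) with a by ring. f_equal. apply ceq; simpl; ring. }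
  rewrite E, Cmod_mult, Cmod_ex, Rmult_1_l.
  apply Rsqr_incr_0_var. 2: apply Rabs_pos. unfold Rsqr. 
  replace (Cmod (Cminus (ex (a - b)) (RtoC 1)) * Cmod (Cminus (ex (a - b)) (RtoC 1))) with (Cmod (Cminus (ex (a - b)) (RtoC 1)) ^ 2) by ring.
  rewrite Cmod_ex1_sq. pose proof (cos_lb (a - b)). 
  replace (Rabs (a - b) * Rabs (a - b)) with ((a-b)^2). lra. rewrite <- Rabs_mult. rewrite Rabs_right. ring. pose proof (Rle_0_sqr (a-b)). unfold Rsqr in *. lra. Qed.

Lemma cos_le_window t y : 0 <= t -> t <= PI -> t <= y -> y <= 2 * PI - t -> cos y <= cos t.
Proof. intros H1 H2 H3 H4. destruct (Rle_dec y PI).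
  destruct (Req_dec t y). subst; lra. left. apply cos_decreasing_1; lra.
  replace (cos y) with (cos (2 * PI - y)). destruct (Req_dec t (2*PI - y)). rewrite <- H; lra.
  left. apply cos_decreasing_1; lra.
  replace (2 * PI - y) with (- y + 2 * INR 1 * PI) by (simpl; ring). rewrite cos_period, cos_neg. auto. Qed.



Lemma dbl n (a : nat -> R) :
  (rsum n (fun j => cos (a j))) ^ 2 + (rsum n (fun j => sin (a j))) ^ 2
  = rsum n (fun j => rsum n (fun l => cos (a j - a l))).
Proof. replace ((rsum n (fun j => cos (a j))) ^ 2) with (rsum n (fun j => cos (a j)) * rsum n (fun j => cos (a j))) by ring.
  replace ((rsum n (fun j => sin (a j))) ^ 2) with (rsum n (fun j => sin (a j)) * rsum n (fun j => sin (a j))) by ring.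
  rewrite !rsum_mult, <- rsum_plus. apply rsum_ext. intros j _. rewrite <- rsum_plus. apply rsum_ext. intros l _.
  rewrite cos_minus. ring. Qed.

Lemma Cmod_csum_ex_sq n a : Cmod (csum n (fun j => ex (a j))) ^ 2 = rsum n (fun j => rsum n (fun l => cos (a j - a l))).
Proof. rewrite Cmod_sq, csum_fst, csum_snd. simpl. apply dbl. Qed.

Definition Dk (K : nat) (th : R) : CC := csum (S K) (fun j => ex (INR j * th)).
Definition Fej (K : nat) (th : R) : R := (Cmod (Dk K th)) ^ 2 / INR (S K).

Lemma Fej_nonneg K th : 0 <= Fej K th.
Proof. unfold Fej. apply Rdiv_le_0_compat. apply pow2_ge_0. apply lt_0_INR; lia. Qed.

Lemma Fej_dbl K th : INR (S K) * Fej K th = rsum (S K) (fun j => rsum (S K) (fun l => cos ((INR j - INR l) * th))).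
Proof. unfold Fej. field_simplify. 2: apply not_0_INR; lia. unfold Dk. rewrite Cmod_csum_ex_sq.
  apply rsum_ext; intros; apply rsum_ext; intros. f_equal. ring. Qed.

Lemma Fej_F3 K th : (2 - 2 * cos th) * Fej K th <= 4 / INR (S K).
Proof. unfold Fej. assert (HK : 0 < INR (S K)) by (apply lt_0_INR; lia).
  rewrite <- Cmod_ex1_sq. unfold Rdiv. rewrite <- Rmult_assoc. apply Rmult_le_compat_r. 
  left; apply Rinv_0_lt_compat; auto.
  replace (Cmod (Cminus (ex th) (RtoC 1)) ^ 2 * Cmod (Dk K th) ^ 2) with (Cmod (Cmult (Cminus (ex th) (RtoC 1)) (Dk K th)) ^ 2)
   by (rewrite Cmod_mult; ring).
  unfold Dk. replace (csum (S K) (fun j => ex (INR j * th))) with (csum (S K) (fun j => Cpow (ex th) j))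
   by (apply csum_ext; intros; apply ex_pow).
  rewrite geom. assert (Cmod (Cminus (Cpow (ex th) (S K)) (RtoC 1)) <= 2).
  { unfold Cminus. eapply Rle_trans. apply Cmod_triangle. rewrite Cmod_opp, Cmod_pow, Cmod_ex, pow1, Cmod_1. lra. }
  pose proof (Cmod_ge_0 (Cminus (Cpow (ex th) (S K)) (RtoC 1))). nra. Qed.

Lemma ex_intdiff j l : ex (2 * PI * (INR j - INR l)) = RtoC 1.
Proof. replace (2 * PI * (INR j - INR l)) with (2 * PI * INR j + - (2 * PI * INR l)) by ring.
  rewrite ex_add, ex_int. rewrite <- (ex_neg (2 * PI * INR l)) at 2. rewrite ex_int.
  apply ceq; simpl; ring. Qed.

Lemma q_powL L d : (L <> 0)%nat -> Cpow (ex (2 * PI * d / INR L)) L = ex (2 * PI * d).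
Proof. intros H. rewrite ex_pow. f_equal. field. apply not_0_INR; auto. Qed.

Lemma q_lb L d : (0 < L)%nat -> 4 * Rabs d <= INR L ->
  4 * Rabs d / INR L <= Cmod (Cminus (ex (2 * PI * d / INR L)) (RtoC 1)).
Proof. intros HL Hd. assert (HL' : 0 < INR L) by (apply lt_0_INR; auto). pose proof PI_gt3.
  apply Rsqr_incr_0_var. 2: apply Cmod_ge_0. unfold Rsqr.
  replace (Cmod (Cminus (ex (2 * PI * d / INR L)) (RtoC 1)) * Cmod (Cminus (ex (2 * PI * d / INR L)) (RtoC 1)))
   with (Cmod (Cminus (ex (2 * PI * d / INR L)) (RtoC 1)) ^ 2) by ring.
  rewrite Cmod_ex1_sq. eapply Rle_trans. 2: apply two_cos_lb.
  - assert (Rabs d * Rabs d = d * d). { rewrite <- Rabs_mult. apply Rabs_right. pose proof (Rle_0_sqr d). unfold Rsqr in *. lra. }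
    unfold Rdiv. replace (4 * Rabs d * / INR L * (4 * Rabs d * / INR L)) with (16 * (Rabs d * Rabs d) * / INR L * / INR L) by ring.
    rewrite H0. replace ((2 * PI * d * / INR L) ^ 2 / 2) with (2 * (PI * PI) * (d * d) * / INR L * / INR L) by (field; lra).
    assert (0 <= d * d * / INR L * / INR L). { pose proof (Rle_0_sqr d). unfold Rsqr in *. 
      apply Rmult_le_pos; [apply Rmult_le_pos|]; auto; left; apply Rinv_0_lt_compat; auto. }
    set (X := d * d * / INR L * / INR L) in *. 
    replace (16 * (d * d) * / INR L * / INR L) with (16 * X) by (unfold X; ring).
    replace (2 * (PI * PI) * (d * d) * / INR L * / INR L) with (2 * (PI * PI) * X) by (unfold X; ring).
    replace ((2 * PI * d * / INR L) ^ 2 * / 2) with (2 * (PI * PI) * X) by (unfold X; field; lra). assert (PI * PI >= 9) by nra. nra.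
  - unfold Rdiv. rewrite !Rabs_mult. rewrite (Rabs_right 2) by lra. rewrite (Rabs_right PI) by lra.
    rewrite (Rabs_right (/ INR L)) by (left; apply Rinv_0_lt_compat; auto).
    apply (Rmult_le_reg_r (INR L)); auto. field_simplify; try lra. pose proof (Rabs_pos d). nra. Qed.

Lemma Cmult_integral (x y : CC) : Cmult x y = RtoC 0 -> x = RtoC 0 \/ y = RtoC 0.
Proof. intros H. assert (Cmod x * Cmod y = 0). rewrite <- Cmod_mult, H. apply Cmod_0.
  apply Rmult_integral in H0. destruct H0; [left|right]; apply Cmod_eq_0; auto. Qed.

Open Scope C_scope.
Lemma orth (q : CC) L : q ^ L = 1 -> q <> 1 -> csum L (fun m => q ^ m) = 0.
Proof. intros H1 H2. assert (E := geom q L). rewrite H1 in E. replace (1 - 1) with (RtoC 0) in E by (apply ceq; simpl; ring).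
  apply Cmult_integral in E. destruct E as [E|E]; auto. exfalso. apply H2.
  replace q with (q - 1 + 1) by ring. rewrite E. ring. Qed.
Close Scope C_scope.

Lemma weight_bound L d z (phi : nat -> R) :
  Rabs (rsum L (fun m => cos (d * (2 * PI * (INR m - z) / INR L)) * phi m))
  <= Cmod (csum L (fun m => Cmult (Cpow (ex (2 * PI * d / INR L)) m) (RtoC (phi m)))).
Proof. assert (E : rsum L (fun m => cos (d * (2 * PI * (INR m - z) / INR L)) * phi m)
    = fst (Cmult (ex (- (2 * PI * d * z / INR L))) (csum L (fun m => Cmult (Cpow (ex (2 * PI * d / INR L)) m) (RtoC (phi m)))))).
  { rewrite csum_scal, csum_fst. apply rsum_ext. intros m _. rewrite Cmult_assoc, ex_pow, <- ex_add. simpl. 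
    rewrite Rmult_0_r, Rminus_0_r. f_equal. f_equal. unfold Rdiv. ring. }
  rewrite E. eapply Rle_trans. apply re_le_Cmod. rewrite Cmod_mult, Cmod_ex. lra. Qed.

Definition cnt N (u : nat -> nat) (m : nat) : R := rsum N (fun i => if lt_dec (u i) m then 1 else 0).
Definition Psi N L u m := cnt N u m - INR N * INR m / INR L.

Open Scope C_scope.
Lemma csum_lin n f g c : csum n (fun i => f i - c * g i) = csum n f - c * csum n g.
Proof. induction n; simpl. apply ceq; simpl; ring. rewrite IHn. ring. Qed.
Lemma psi_hat N L u (q : CC) : (0 < L)%nat -> (forall i, (i < N)%nat -> (u i < L)%nat) ->
  q ^ L = 1 -> q <> 1 ->
  (q - 1) * csum L (fun m => q ^ m * RtoC (Psi N L u m)) = - (q * csum N (fun i => q ^ (u i))).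
Proof. intros HL Hu H1 H2. assert (HL' : INR L <> 0%R) by (apply not_0_INR; lia).
  assert (E1 : (q - 1) * csum L (fun m => RtoC (INR m) * q ^ m) = RtoC (INR L)).
  { assert (E := geom_lin q L). simpl Cpow in E. rewrite H1 in E.
    assert (E' : (q - 1) * ((q - 1) * csum L (fun m => RtoC (INR m) * q ^ m) - RtoC (INR L)) = 0).
    { transitivity ((q - 1) * (q - 1) * csum L (fun m => RtoC (INR m) * q ^ m) - (q - 1) * RtoC (INR L)). ring. rewrite E. ring. }
    apply Cmult_integral in E'. destruct E' as [E'|E']. exfalso; apply H2. replace q with (q - 1 + 1) by ring. rewrite E'. ring.
    replace ((q - 1) * csum L (fun m => RtoC (INR m) * q ^ m)) with ((q - 1) * csum L (fun m => RtoC (INR m) * q ^ m) - RtoC (INR L) + RtoC (INR L)) by ring.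
    rewrite E'. ring. }
  assert (E2 : csum L (fun m => q ^ m * RtoC (cnt N u m)) = csum N (fun i => csum L (fun m => if le_dec (S (u i)) m then q ^ m else 0))).
  { rewrite <- csum_swap. apply csum_ext. intros m _. unfold cnt. rewrite csum_RtoC, csum_scal. apply csum_ext. intros i _.
    destruct (lt_dec (u i) m); destruct (le_dec (S (u i)) m); try lia; apply ceq; simpl; ring. }
  assert (E3 : (q - 1) * csum N (fun i => csum L (fun m => if le_dec (S (u i)) m then q ^ m else 0)) = csum N (fun i => 1 - q * q ^ (u i))).
  { rewrite csum_scal. apply csum_ext. intros i Hi. rewrite geom_tail. rewrite H1. simpl. ring. apply Hu in Hi. lia. }
  assert (E4 : csum N (fun i => 1 - q * q ^ (u i)) = RtoC (INR N) - q * csum N (fun i => q ^ (u i))).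
  { clear. induction N. simpl. apply ceq; simpl; ring. simpl csum. rewrite IHN, S_INR. apply ceq; simpl; ring. }
  unfold Psi. 
  transitivity ((q - 1) * csum L (fun m => q ^ m * RtoC (cnt N u m)) - RtoC (INR N / INR L) * ((q - 1) * csum L (fun m => RtoC (INR m) * q ^ m))).
  { transitivity ((q - 1) * (csum L (fun m => q ^ m * RtoC (cnt N u m)) - RtoC (INR N / INR L) * csum L (fun m => RtoC (INR m) * q ^ m))).
    f_equal. rewrite <- csum_lin. apply csum_ext. intros m _. rewrite RtoC_minus.
    replace (RtoC (INR N * INR m / INR L)) with (RtoC (INR N / INR L) * RtoC (INR m)). ring.
    apply ceq; simpl; field; auto. ring. }
  rewrite E1, E2, E3, E4. replace (RtoC (INR N / INR L) * RtoC (INR L)) with (RtoC (INR N)). ring.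
  apply ceq; simpl; field; auto. Qed.
Close Scope C_scope.

Definition th (L : nat) (z : R) (m : nat) : R := 2 * PI * (INR m - z) / INR L.

Lemma fej_expand K L z (phi : nat -> R) :
  INR (S K) * rsum L (fun m => Fej K (th L z m) * phi m)
  = rsum (S K) (fun j => rsum (S K) (fun l => rsum L (fun m => cos ((INR j - INR l) * th L z m) * phi m))).
Proof. rewrite rsum_scal.
  transitivity (rsum L (fun m => rsum (S K) (fun j => rsum (S K) (fun l => cos ((INR j - INR l) * th L z m) * phi m)))).
  apply rsum_ext. intros m _. rewrite <- Rmult_assoc, Fej_dbl. rewrite (Rmult_comm (rsum _ _) (phi m)), rsum_scal. apply rsum_ext. intros j _.
  rewrite rsum_scal. apply rsum_ext. intros l _. ring.
  rewrite rsum_swap. apply rsum_ext. intros j _. apply rsum_swap. Qed.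

Definition Wr N L (u : nat -> nat) (d : R) : R := Cmod (csum N (fun i => ex (INR (u i) * (2 * PI * d / INR L)))).

Lemma Wr_neg N L u d : Wr N L u (- d) = Wr N L u d.
Proof. unfold Wr. rewrite <- Cmod_conj, csum_conj. f_equal. apply csum_ext. intros i _. rewrite ex_conj. f_equal.
  unfold Rdiv; ring. Qed.

Lemma Wr_nonneg N L u d : 0 <= Wr N L u d.
Proof. apply Cmod_ge_0. Qed.

Lemma pair_gen K L z (phi : nat -> R) j l : (0 < L)%nat -> (4 * K <= L)%nat -> (j <= K)%nat -> (l <= K)%nat -> j <> l ->
  Rabs (rsum L (fun m => cos ((INR j - INR l) * th L z m) * phi m))
  <= Cmod (csum L (fun m => Cmult (Cpow (ex (2 * PI * (INR j - INR l) / INR L)) m) (RtoC (phi m)))) /\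
  Cpow (ex (2 * PI * (INR j - INR l) / INR L)) L = RtoC 1 /\
  4 * Rabs (INR j - INR l) / INR L <= Cmod (Cminus (ex (2 * PI * (INR j - INR l) / INR L)) (RtoC 1)) /\
  0 < 4 * Rabs (INR j - INR l) / INR L.
Proof. intros HL HK Hj Hl Hjl. assert (HL' : 0 < INR L) by (apply lt_0_INR; auto).
  assert (Hd : 4 * Rabs (INR j - INR l) <= INR L).
  { apply le_INR in HK. rewrite mult_INR in HK. simpl in HK. apply le_INR in Hj. apply le_INR in Hl.
    pose proof (pos_INR j). pose proof (pos_INR l). apply Rabs_le_between' in HK || idtac.
    destruct (Rle_dec 0 (INR j - INR l)). rewrite Rabs_right by lra. lra. rewrite Rabs_left by lra. lra. }
  split. unfold th. apply weight_bound.
  split. rewrite q_powL by lia. apply ex_intdiff.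
  split. apply q_lb; auto.
  apply Rmult_lt_0_compat. 2: apply Rinv_0_lt_compat; auto. assert (INR j <> INR l) by (intro; apply INR_eq in H; auto).
  assert (0 < Rabs (INR j - INR l)) by (apply Rabs_pos_lt; lra). lra. Qed.

Lemma q_neq1 (q : CC) c : 0 < c -> c <= Cmod (Cminus q (RtoC 1)) -> q <> RtoC 1.
Proof. intros H1 H2 E. subst. replace (Cminus (RtoC 1) (RtoC 1)) with (RtoC 0) in H2 by (apply ceq; simpl; ring).
  rewrite Cmod_0 in H2. lra. Qed.

Lemma pair_one K L z j l : (0 < L)%nat -> (4 * K <= L)%nat -> (j <= K)%nat -> (l <= K)%nat -> j <> l ->
  rsum L (fun m => cos ((INR j - INR l) * th L z m) * 1) = 0.
Proof. intros. destruct (pair_gen K L z (fun _ => 1) j l H H0 H1 H2 H3) as [A [B [C D]]].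
  rewrite (csum_ext _ _ (fun m => Cpow (ex (2 * PI * (INR j - INR l) / INR L)) m)) in A.
  rewrite orth in A; auto. rewrite Cmod_0 in A. pose proof (Rabs_pos (rsum L (fun m => cos ((INR j - INR l) * th L z m) * 1))).
  assert (Rabs (rsum L (fun m => cos ((INR j - INR l) * th L z m) * 1)) = 0) by lra.
  apply Rabs_eq_0 in H5. auto. eapply q_neq1; eauto.
  intros. apply ceq; simpl; ring. Qed.

Lemma pair_psi N K L u z j l : (0 < L)%nat -> (4 * K <= L)%nat -> (j <= K)%nat -> (l <= K)%nat -> j <> l ->
  (forall i, (i < N)%nat -> (u i < L)%nat) ->
  Rabs (rsum L (fun m => cos ((INR j - INR l) * th L z m) * Psi N L u m))
  <= INR L / 4 * (Wr N L u (INR j - INR l) / Rabs (INR j - INR l)).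
Proof. intros HL HK Hj Hl Hjl Hu. destruct (pair_gen K L z (Psi N L u) j l HL HK Hj Hl Hjl) as [A [B [C D]]].
  set (q := ex (2 * PI * (INR j - INR l) / INR L)) in *.
  assert (Hq : q <> RtoC 1) by (eapply q_neq1; eauto).
  pose proof (psi_hat N L u q HL Hu B Hq) as E.
  assert (E2 : Cmod (Cminus q (RtoC 1)) * Cmod (csum L (fun m => Cmult (Cpow q m) (RtoC (Psi N L u m)))) = Wr N L u (INR j - INR l)).
  { rewrite <- Cmod_mult. rewrite E. rewrite Cmod_opp, Cmod_mult. unfold q at 1. rewrite Cmod_ex, Rmult_1_l.
    unfold Wr. f_equal. apply csum_ext. intros. unfold q. apply ex_pow. }
  assert (HL' : 0 < INR L) by (apply lt_0_INR; auto).
  assert (0 < Rabs (INR j - INR l)). { unfold Rdiv in D. 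
    assert (0 < 4 * Rabs (INR j - INR l)). { apply (Rmult_lt_reg_r (/ INR L)). apply Rinv_0_lt_compat; auto. lra. } lra. }
  eapply Rle_trans. apply A. 
  set (X := Cmod (csum L (fun m => Cmult (Cpow q m) (RtoC (Psi N L u m))))) in *.
  assert (0 <= X) by apply Cmod_ge_0.
  set (Y := Cmod (Cminus q (RtoC 1))) in *. set (a := Rabs (INR j - INR l)) in *.
  assert (4 * a / INR L * X <= Wr N L u (INR j - INR l)). { rewrite <- E2. apply Rmult_le_compat_r; auto. }
  apply (Rmult_le_reg_l (4 * a / INR L)). auto.
  replace (4 * a / INR L * (INR L / 4 * (Wr N L u (INR j - INR l) / a))) with (Wr N L u (INR j - INR l)). lra.
  field. lra. Qed.

Lemma rsum_trunc n j f : (j <= n)%nat -> (forall i, (j <= i)%nat -> f i = 0) -> rsum n f = rsum j f.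
Proof. intros H Hf. induction H. auto. simpl. rewrite IHle, Hf by lia. ring. Qed.

Lemma sum_left n j (h : nat -> R) : (j <= n)%nat ->
  rsum n (fun l => if lt_dec l j then h (j - l)%nat else 0) = rsum j (fun d => h (S d)).
Proof. intros H. rewrite (rsum_trunc n j). rewrite <- rsum_rev. apply rsum_ext. intros. destruct (lt_dec i j); auto; lia.
  auto. intros. destruct (lt_dec i j); auto; lia. Qed.

Lemma sum_right n j (h : nat -> R) :
  rsum n (fun l => if lt_dec j l then h (l - j)%nat else 0) = rsum (n - S j) (fun e => h (S e)).
Proof. induction n. auto. simpl rsum at 1. rewrite IHn. destruct (lt_dec j n).
  replace (S n - S j)%nat with (S (n - S j)) by lia. simpl. f_equal. f_equal. lia.
  replace (S n - S j)%nat with (n - S j)%nat by lia. ring. Qed.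

Lemma F2 K L z : (0 < L)%nat -> (4 * K <= L)%nat -> rsum L (fun m => Fej K (th L z m)) = INR L.
Proof. intros HL HK. assert (HS : 0 < INR (S K)) by (apply lt_0_INR; lia).
  apply (Rmult_eq_reg_l (INR (S K))). 2: lra.
  transitivity (INR (S K) * rsum L (fun m => Fej K (th L z m) * 1)). f_equal. apply rsum_ext; intros; ring.
  rewrite fej_expand. rewrite <- rsum_const. apply rsum_ext. intros j Hj.
  rewrite (rsum_diag _ _ j Hj).
  rewrite (rsum_ext (S K) (fun l => if Nat.eq_dec l j then 0 else rsum L (fun m => cos ((INR j - INR l) * th L z m) * 1)) (fun _ => 0)).
  rewrite (rsum_ext L (fun m => cos ((INR j - INR j) * th L z m) * 1) (fun _ => 1)). rewrite !rsum_const. ring.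
  intros. replace (INR j - INR j) with 0 by ring. rewrite Rmult_0_l, cos_0. ring.
  intros l Hl. destruct (Nat.eq_dec l j). auto. apply pair_one with K; auto; lia. Qed.

Definition Eg N K L u : R := rsum K (fun e => Wr N L u (INR (S e)) / INR (S e)).

Lemma F4 N K L u z : (0 < L)%nat -> (4 * K <= L)%nat -> (forall i, (i < N)%nat -> (u i < L)%nat) ->
  Rabs (rsum L (fun m => Fej K (th L z m) * Psi N L u m) - rsum L (fun m => Psi N L u m)) <= INR L / 2 * Eg N K L u.
Proof. intros HL HK Hu. assert (HS : 0 < INR (S K)) by (apply lt_0_INR; lia).
  set (h := fun k : nat => Wr N L u (INR k) / INR k).
  assert (Hh : forall k, 0 <= h k). { intros. unfold h. destruct k. simpl. unfold Rdiv. rewrite Rinv_0. lra.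
    apply Rdiv_le_0_compat. apply Wr_nonneg. apply lt_0_INR; lia. }
  apply (Rmult_le_reg_l (INR (S K))). auto. rewrite <- (Rabs_right (INR (S K))) at 1 by lra. rewrite <- Rabs_mult.
  rewrite Rmult_minus_distr_l, fej_expand, <- rsum_const, <- rsum_minus.
  eapply Rle_trans. apply rsum_abs. rewrite <- (rsum_const (S K) (INR L / 2 * Eg N K L u)). apply rsum_le. intros j Hj.
  rewrite (rsum_diag _ _ j Hj). 
  replace (rsum L (fun m => cos ((INR j - INR j) * th L z m) * Psi N L u m)) with (rsum L (fun m => Psi N L u m)).
  2: { apply rsum_ext. intros. replace (INR j - INR j) with 0 by ring. rewrite Rmult_0_l, cos_0. ring. }
  replace (rsum L (fun m => Psi N L u m) + rsum (S K) (fun l => if Nat.eq_dec l j then 0 else rsum L (fun m => cos ((INR j - INR l) * th L z m) * Psi N L u m)) - rsum L (fun m => Psi N L u m))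
   with (rsum (S K) (fun l => if Nat.eq_dec l j then 0 else rsum L (fun m => cos ((INR j - INR l) * th L z m) * Psi N L u m))) by ring.
  eapply Rle_trans. apply rsum_abs.
  eapply Rle_trans with (rsum (S K) (fun l => INR L / 4 * ((if lt_dec l j then h (j - l)%nat else 0) + (if lt_dec j l then h (l - j)%nat else 0)))).
  { apply rsum_le. intros l Hl. destruct (Nat.eq_dec l j). rewrite Rabs_R0. 
    apply Rmult_le_pos. pose proof (pos_INR L); lra. destruct (lt_dec l j), (lt_dec j l); try lia; pose proof (Hh (j - l)%nat); pose proof (Hh (l - j)%nat); lra.
    eapply Rle_trans. apply pair_psi with K; auto; lia. apply Rmult_le_compat_l. pose proof (pos_INR L); lra.
    destruct (lt_dec l j), (lt_dec j l); try lia.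
    - unfold h. rewrite minus_INR by lia. rewrite Rabs_right. lra. apply Rle_ge. apply lt_INR in l0. lra.
    - unfold h. rewrite minus_INR by lia. replace (INR j - INR l) with (- (INR l - INR j)) by ring. rewrite Wr_neg, Rabs_Ropp.
      rewrite Rabs_right. lra. apply Rle_ge. apply lt_INR in l0. lra. }
  rewrite <- rsum_scal, rsum_plus, sum_left, sum_right by lia.
  unfold Eg. fold h. 
  assert (rsum j (fun d => h (S d)) <= rsum K (fun d => h (S d))) by (apply rsum_mono_len; auto; lia).
  assert (rsum (S K - S j) (fun d => h (S d)) <= rsum K (fun d => h (S d))) by (apply rsum_mono_len; auto; lia).
  replace (rsum K (fun e => Wr N L u (INR (S e)) / INR (S e))) with (rsum K (fun d => h (S d))) by auto.
  pose proof (pos_INR L). nra. Qed.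

Lemma nat_floor x : 0 <= x -> exists h : nat, INR h <= x < INR h + 1.
Proof. intros Hx. destruct (base_Int_part x) as [H1 H2].
  assert (0 <= Int_part x)%Z. { apply le_IZR. assert (IZR (Int_part x) > -1) by lra.
    assert (-1 < Int_part x)%Z by (apply lt_IZR; lra). apply IZR_le. lia. }
  exists (Z.to_nat (Int_part x)). rewrite INR_IZR_INZ, Z2Nat.id by auto. lra. Qed.

Lemma cnt_mono N u a b : (a <= b)%nat -> cnt N u a <= cnt N u b.
Proof. intros H. unfold cnt. apply rsum_le. intros. destruct (lt_dec (u i) a), (lt_dec (u i) b); try lra; lia. Qed.

Lemma cnt_bounds N u a : 0 <= cnt N u a <= INR N.
Proof. unfold cnt. split. apply rsum_nonneg. intros. destruct (lt_dec (u i) a); lra.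
  rewrite <- (Rmult_1_r (INR N)), <- rsum_const. apply rsum_le. intros. destruct (lt_dec (u i) a); lra. Qed.

Definition rdist (L a b : nat) : nat := if le_dec b a then (a - b)%nat else (a + L - b)%nat.

Lemma OS N L u a b : (0 < L)%nat -> (a < L)%nat -> (b < L)%nat ->
  Psi N L u a >= Psi N L u b - INR N * INR (rdist L a b) / INR L.
Proof. intros HL Ha Hb. assert (HL' : 0 < INR L) by (apply lt_0_INR; auto). unfold Psi, rdist.
  destruct (le_dec b a).
  - pose proof (cnt_mono N u b a l). rewrite minus_INR by auto. 
    replace (INR N * INR a / INR L) with (INR N * INR b / INR L + INR N * (INR a - INR b) / INR L) by (field; lra). lra.
  - pose proof (cnt_bounds N u a). pose proof (cnt_bounds N u b). rewrite minus_INR by lia. rewrite plus_INR.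
    assert (INR N * (INR a + INR L - INR b) / INR L = INR N * INR a / INR L + INR N - INR N * INR b / INR L) by (field; lra).
    lra. Qed.

Lemma cos_window L a b h : (a < L)%nat -> (b < L)%nat -> (2 * h < rdist L a b)%nat -> (8 * h <= L)%nat ->
  cos (2 * PI * (INR a - (INR b + INR h)) / INR L) <= cos (2 * PI * INR h / INR L).
Proof. intros Ha Hb Hr Hh. assert (HL' : 0 < INR L) by (apply lt_0_INR; lia). pose proof PI_gt3.
  set (r := rdist L a b) in *. assert (Hr2 : (r < L)%nat) by (unfold r, rdist; destruct (le_dec b a); lia).
  assert (E : exists k : nat, INR a - (INR b + INR h) + INR k * INR L = INR r - INR h).
  { unfold r, rdist. destruct (le_dec b a). exists 0%nat. rewrite minus_INR by auto. simpl. ring.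
    exists 1%nat. rewrite minus_INR by lia. rewrite plus_INR. simpl. ring. }
  destruct E as [k Ek].
  replace (cos (2 * PI * (INR a - (INR b + INR h)) / INR L)) with (cos (2 * PI * (INR r - INR h) / INR L)).
  2: { rewrite <- Ek. replace (2 * PI * (INR a - (INR b + INR h) + INR k * INR L) / INR L) with (2 * PI * (INR a - (INR b + INR h)) / INR L + 2 * INR k * PI) by (field; lra).
       apply cos_period. }
  apply le_INR in Hh. apply lt_INR in Hr. apply lt_INR in Hr2. rewrite mult_INR in Hh, Hr. simpl in Hh, Hr.
  apply cos_le_window.
  - pose proof (pos_INR h). apply Rdiv_le_0_compat; nra.
  - apply (Rmult_le_reg_r (INR L)); auto. field_simplify; try lra. pose proof (pos_INR h). nra.
  - apply Rmult_le_compat_r. left; apply Rinv_0_lt_compat; auto. nra.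
  - apply (Rmult_le_reg_r (INR L)); auto. field_simplify; try lra. nra. Qed.

Lemma avg_lemma K L z (f : nat -> R) A B : (0 < L)%nat -> (4 * K <= L)%nat -> 0 <= B ->
  (forall m, (m < L)%nat -> A - B * (2 - 2 * cos (th L z m)) <= f m) ->
  INR L * (A - B * (4 / INR (S K))) <= rsum L (fun m => Fej K (th L z m) * f m).
Proof. intros HL HK HB Hf.
  apply Rle_trans with (rsum L (fun m => A * Fej K (th L z m) - B * ((2 - 2 * cos (th L z m)) * Fej K (th L z m)))).
  2: { apply rsum_le. intros m Hm. specialize (Hf m Hm). pose proof (Fej_nonneg K (th L z m)). nra. }
  rewrite rsum_minus, <- !rsum_scal, F2 by auto.
  assert (rsum L (fun m => (2 - 2 * cos (th L z m)) * Fej K (th L z m)) <= INR L * (4 / INR (S K))).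
  { rewrite <- rsum_const. apply rsum_le. intros. apply Fej_F3. }
  nra. Qed.

Lemma c_pos L h : (1 <= h)%nat -> (8 * h <= L)%nat ->
  18 * (INR h / INR L) ^ 2 <= 2 - 2 * cos (2 * PI * INR h / INR L).
Proof. intros H1 H2. assert (HL : 0 < INR L) by (apply lt_0_INR; lia). pose proof PI_gt3. pose proof PI_4.
  apply le_INR in H2. rewrite mult_INR in H2. simpl in H2. pose proof (pos_INR h).
  eapply Rle_trans. 2: apply two_cos_lb.
  - replace ((2 * PI * INR h / INR L) ^ 2 / 2) with (2 * (PI * PI) * (INR h / INR L) ^ 2) by (field; lra).
    assert (0 <= (INR h / INR L) ^ 2) by apply pow2_ge_0. assert (PI * PI >= 9) by nra. nra.
  - rewrite Rabs_right. apply (Rmult_le_reg_r (INR L)); auto. field_simplify; try lra. nra.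
    apply Rle_ge. apply Rdiv_le_0_compat; nra. Qed.

Section Cases.
Variables (N K L : nat) (u : nat -> nat) (m0 m1 h : nat).
Hypotheses (HL : (0 < L)%nat) (HK : (4 * K <= L)%nat) (Hu : forall i, (i < N)%nat -> (u i < L)%nat)
  (Hm0 : (m0 < L)%nat) (Hm1 : (m1 < L)%nat)
  (Hmax : forall m, (m < L)%nat -> Psi N L u m <= Psi N L u m0)
  (Hmin : forall m, (m < L)%nat -> Psi N L u m1 <= Psi N L u m)
  (Hh1 : (1 <= h)%nat) (Hh8 : (8 * h <= L)%nat).

Let mu := rsum L (fun m => Psi N L u m) / INR L.
Let al := Psi N L u m0 - mu.
Let be := mu - Psi N L u m1.
Let c := 2 - 2 * cos (2 * PI * INR h / INR L).

Lemma cpos : 0 < c.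
Proof. pose proof (c_pos L h Hh1 Hh8). assert (0 < INR h / INR L). apply Rdiv_lt_0_compat; apply lt_0_INR; lia.
  unfold c. nra. Qed.

Lemma max_case : al - 2 * INR h * INR N / INR L - (al + be) / c * (4 / INR (S K)) <= Eg N K L u / 2.
Proof. assert (HL' : 0 < INR L) by (apply lt_0_INR; auto). pose proof cpos.
  assert (Eal : al = Psi N L u m0 - mu) by reflexivity. assert (Ebe : be = mu - Psi N L u m1) by reflexivity.
  assert (Hab : 0 <= al + be) by (unfold al, be; pose proof (Hmin m0 Hm0); lra).
  set (z := INR m0 + INR h).
  pose proof (avg_lemma K L z (fun m => Psi N L u m - mu) (al - 2 * INR h * INR N / INR L) ((al + be) / c) HL HK
     ltac:(apply Rdiv_le_0_compat; lra)) as A.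
  assert (Hsum : rsum L (fun m => Fej K (th L z m) * (Psi N L u m - mu)) <= INR L / 2 * Eg N K L u).
  { pose proof (F4 N K L u z HL HK Hu) as F. apply Rabs_le_between in F || (apply Rabs_def2b in F || idtac).
    replace (rsum L (fun m => Fej K (th L z m) * (Psi N L u m - mu))) with
      (rsum L (fun m => Fej K (th L z m) * Psi N L u m) - rsum L (fun m => Psi N L u m)).
    pose proof (Rle_abs (rsum L (fun m => Fej K (th L z m) * Psi N L u m) - rsum L (fun m => Psi N L u m))). lra.
    transitivity (rsum L (fun m => Fej K (th L z m) * Psi N L u m) - mu * rsum L (fun m => Fej K (th L z m))).
    rewrite F2 by auto. unfold mu. field. lra.
    rewrite rsum_scal, <- rsum_minus. apply rsum_ext. intros. ring. }
  assert (INR L * (al - 2 * INR h * INR N / INR L - (al + be) / c * (4 / INR (S K))) <= INR L * (Eg N K L u / 2)).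
  { eapply Rle_trans. apply A. 2: lra.
    intros m Hm. cbv beta. assert (0 <= 2 - 2 * cos (th L z m)) by (pose proof (COS_bound (th L z m)); lra).
    destruct (le_dec (rdist L m m0) (2 * h)).
    - pose proof (OS N L u m m0 HL Hm Hm0). apply le_INR in l. rewrite mult_INR in l. simpl in l.
      assert (INR N * INR (rdist L m m0) / INR L <= 2 * INR h * INR N / INR L).
      { unfold Rdiv. apply Rmult_le_compat_r. left; apply Rinv_0_lt_compat; auto. pose proof (pos_INR N). nra. }
      assert (0 <= (al + be) / c * (2 - 2 * cos (th L z m))) by (apply Rmult_le_pos; auto; apply Rdiv_le_0_compat; lra).
      lra.
    - assert (cos (th L z m) <= cos (2 * PI * INR h / INR L)). { unfold th, z. apply cos_window; auto; lia. }
      assert ((al + be) <= (al + be) / c * (2 - 2 * cos (th L z m))).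
      { replace (al + be) with ((al + be) / c * c) at 1 by (field; lra). apply Rmult_le_compat_l.
        apply Rdiv_le_0_compat; lra. unfold c. lra. }
      pose proof (Hmin m Hm). assert (0 <= 2 * INR h * INR N / INR L).
      { apply Rdiv_le_0_compat; auto. pose proof (pos_INR h); pose proof (pos_INR N); nra. }
      lra. }
  apply Rmult_le_reg_l in H0; auto. Qed.

Lemma min_case : be - 2 * INR h * INR N / INR L - (al + be) / c * (4 / INR (S K)) <= Eg N K L u / 2.
Proof. assert (HL' : 0 < INR L) by (apply lt_0_INR; auto). pose proof cpos.
  assert (Eal : al = Psi N L u m0 - mu) by reflexivity. assert (Ebe : be = mu - Psi N L u m1) by reflexivity.
  assert (Hab : 0 <= al + be) by (unfold al, be; pose proof (Hmin m0 Hm0); lra).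
  set (z := INR m1 - INR h).
  pose proof (avg_lemma K L z (fun m => mu - Psi N L u m) (be - 2 * INR h * INR N / INR L) ((al + be) / c) HL HK
     ltac:(apply Rdiv_le_0_compat; lra)) as A.
  assert (Hsum : rsum L (fun m => Fej K (th L z m) * (mu - Psi N L u m)) <= INR L / 2 * Eg N K L u).
  { pose proof (F4 N K L u z HL HK Hu) as F.
    replace (rsum L (fun m => Fej K (th L z m) * (mu - Psi N L u m))) with
      (- (rsum L (fun m => Fej K (th L z m) * Psi N L u m) - rsum L (fun m => Psi N L u m))).
    pose proof (Rle_abs (- (rsum L (fun m => Fej K (th L z m) * Psi N L u m) - rsum L (fun m => Psi N L u m)))).
    rewrite Rabs_Ropp in H0. lra.
    transitivity (mu * rsum L (fun m => Fej K (th L z m)) - rsum L (fun m => Fej K (th L z m) * Psi N L u m)).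
    rewrite F2 by auto. unfold mu. field. lra.
    rewrite rsum_scal, <- rsum_minus. apply rsum_ext. intros. ring. }
  assert (INR L * (be - 2 * INR h * INR N / INR L - (al + be) / c * (4 / INR (S K))) <= INR L * (Eg N K L u / 2)).
  { eapply Rle_trans. apply A. 2: lra.
    intros m Hm. cbv beta. assert (0 <= 2 - 2 * cos (th L z m)) by (pose proof (COS_bound (th L z m)); lra).
    destruct (le_dec (rdist L m1 m) (2 * h)).
    - pose proof (OS N L u m1 m HL Hm1 Hm). apply le_INR in l. rewrite mult_INR in l. simpl in l.
      assert (INR N * INR (rdist L m1 m) / INR L <= 2 * INR h * INR N / INR L).
      { unfold Rdiv. apply Rmult_le_compat_r. left; apply Rinv_0_lt_compat; auto. pose proof (pos_INR N). nra. }
      assert (0 <= (al + be) / c * (2 - 2 * cos (th L z m))) by (apply Rmult_le_pos; auto; apply Rdiv_le_0_compat; lra).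
      lra.
    - assert (cos (th L z m) <= cos (2 * PI * INR h / INR L)).
      { unfold th, z. replace (2 * PI * (INR m - (INR m1 - INR h)) / INR L) with (- (2 * PI * (INR m1 - (INR m + INR h)) / INR L)) by (field; lra).
        rewrite cos_neg. apply cos_window; auto; lia. }
      assert ((al + be) <= (al + be) / c * (2 - 2 * cos (th L z m))).
      { replace (al + be) with ((al + be) / c * c) at 1 by (field; lra). apply Rmult_le_compat_l.
        apply Rdiv_le_0_compat; lra. unfold c. lra. }
      pose proof (Hmax m Hm). assert (0 <= 2 * INR h * INR N / INR L).
      { apply Rdiv_le_0_compat; auto. pose proof (pos_INR h); pose proof (pos_INR N); nra. }
      lra. }
  apply Rmult_le_reg_l in H0; auto. Qed.
End Cases.

Lemma final_arith (N K L : nat) (g Sp E : R) (c : nat -> R) :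
  (1 <= N)%nat -> (N <= S K)%nat -> (16 * N <= L)%nat -> 0 <= g -> 0 <= Sp -> Sp <= 2 * g -> g <= 2 * INR N -> 0 <= E ->
  (forall h, (1 <= h)%nat -> (8 * h <= L)%nat -> 18 * (INR h / INR L) ^ 2 <= c h) ->
  (forall h, (1 <= h)%nat -> (8 * h <= L)%nat -> g - 2 * INR h * INR N / INR L - Sp / c h * (4 / INR (S K)) <= E / 2) ->
  g <= 1 + E + 35 * sqrt (INR N).
Proof. intros HN HNK HL Hg HS HSg HgN HE Hc H.
  assert (HN' : 1 <= INR N) by (apply le_INR in HN; auto).
  assert (HL' : 16 * INR N <= INR L) by (apply le_INR in HL; rewrite mult_INR in HL; simpl in HL; lra).
  assert (HNK' : INR N <= INR (S K)) by (apply le_INR; auto).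
  pose proof (sqrt_pos (INR N)) as Hs0. 
  destruct (nat_floor (INR L * g / (16 * INR N))) as [h [Hh1 Hh2]]. apply Rdiv_le_0_compat; nra.
  destruct h as [|h'].
  - simpl in Hh2. assert (g < 16 * INR N / INR L). { apply (Rmult_lt_reg_r (INR L / (16 * INR N))). apply Rdiv_lt_0_compat; lra.
      replace (16 * INR N / INR L * (INR L / (16 * INR N))) with 1 by (field; lra). 
      replace (g * (INR L / (16 * INR N))) with (INR L * g / (16 * INR N)) by (field; lra). lra. }
    assert (16 * INR N / INR L <= 1). { apply (Rmult_le_reg_r (INR L)). lra. field_simplify; lra. } lra.
  - set (h := S h') in *. set (x := INR L * g / (16 * INR N)) in *.
    assert (Hh1' : 1 <= INR h) by (unfold h; rewrite S_INR; pose proof (pos_INR h'); lra).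
    assert (Hx2 : x <= 2 * INR h) by lra.
    assert (Hgx : g = 16 * INR N * x / INR L) by (unfold x; field; lra).
    assert (H8 : (8 * h <= L)%nat). { apply INR_le. rewrite mult_INR. replace (INR 8) with 8 by (simpl; lra).
      assert (x * 8 <= INR L).
      { replace (x * 8) with (INR L * (g / (2 * INR N))) by (unfold x; field; lra).
        assert (g / (2 * INR N) <= 1). { unfold Rdiv. apply (Rmult_le_reg_r (2*INR N)); [lra|]. rewrite Rmult_assoc, Rinv_l; lra. }
        rewrite <- (Rmult_1_r (INR L)) at 2. apply Rmult_le_compat_l; lra. } lra. }
    specialize (H h ltac:(unfold h; lia) H8). specialize (Hc h ltac:(unfold h; lia) H8).
    assert (Hgpos : 0 < g). { rewrite Hgx. apply Rdiv_lt_0_compat; [apply Rmult_lt_0_compat; lra | lra]. }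
    set (q := INR h / INR L) in *.
    assert (Hq : g <= 32 * INR N * q). { unfold q. rewrite Hgx.
      replace (32 * INR N * (INR h / INR L)) with (16 * INR N * (2 * INR h) / INR L) by (field; lra).
      unfold Rdiv. apply Rmult_le_compat_r. left; apply Rinv_0_lt_compat; lra. apply Rmult_le_compat_l; lra. }
    assert (Hq0 : 0 < q) by (unfold q; apply Rdiv_lt_0_compat; lra).
    assert (Hc0 : 0 < c h) by nra.
    assert (T1 : 2 * INR h * INR N / INR L <= g / 8).
    { replace (2 * INR h * INR N / INR L) with (2 * INR N * q) by (unfold q; field; lra).
      assert (INR h <= x) by lra. rewrite Hgx. replace (16 * INR N * x / INR L / 8) with (2 * INR N * (x / INR L)) by (field; lra).
      apply Rmult_le_compat_l. lra. unfold q. unfold Rdiv. apply Rmult_le_compat_r. left; apply Rinv_0_lt_compat; lra. lra. }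
    assert (T2 : Sp / c h * g <= 114 * (INR N * INR N)).
    { replace (Sp / c h * g) with (Sp * g / c h) by (field; lra). apply (Rmult_le_reg_r (c h)). auto.
      replace (Sp * g / c h * c h) with (Sp * g) by (field; lra).
      assert (g * g <= 1024 * (INR N * INR N) * (q * q)) by nra.
      assert (Sp * g <= 2 * (g * g)) by nra.
      assert (18 * (q * q) <= c h) by (replace (q * q) with (q ^ 2) by ring; lra).
      assert (0 <= INR N * INR N) by nra. nra. }
    assert (T3 : 4 / INR (S K) <= 4 / INR N). { apply Rmult_le_compat_l. lra. apply Rinv_le_contravar; lra. }
    assert (T4 : Sp / c h * (4 / INR (S K)) * g <= 456 * INR N).
    { assert (0 <= Sp / c h) by (apply Rdiv_le_0_compat; lra).
      assert (Sp / c h * (4 / INR (S K)) * g <= Sp / c h * (4 / INR N) * g).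
      { apply Rmult_le_compat_r. lra. apply Rmult_le_compat_l; auto. }
      replace (Sp / c h * (4 / INR N) * g) with (4 * (Sp / c h * g) / INR N) in H1 by (field; lra).
      assert (4 * (Sp / c h * g) / INR N <= 456 * INR N). { apply (Rmult_le_reg_r (INR N)). lra.
        replace (4 * (Sp / c h * g) / INR N * INR N) with (4 * (Sp / c h * g)) by (field; lra). nra. }
      lra. }
    destruct (Rle_dec g (1 + E + 35 * sqrt (INR N))) as [ok|ko]. auto. exfalso.
    assert (g > E) by lra. assert (g > 35 * sqrt (INR N)) by lra.
    assert (g * g > 1225 * INR N). { assert (sqrt (INR N) * sqrt (INR N) = INR N) by (apply sqrt_sqrt; lra). nra. }
    set (T := Sp / c h * (4 / INR (S K))) in *.
    assert (3 / 8 * g <= T) by lra. nra. Qed.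

Lemma Psi_bounds N L u m : (0 < L)%nat -> (m <= L)%nat -> - INR N <= Psi N L u m <= INR N.
Proof. intros HL Hm. unfold Psi. pose proof (cnt_bounds N u m). assert (HL' : 0 < INR L) by (apply lt_0_INR; auto).
  assert (0 <= INR N * INR m / INR L <= INR N). { split. apply Rdiv_le_0_compat; auto. apply Rmult_le_pos; apply pos_INR.
    apply (Rmult_le_reg_r (INR L)); auto. field_simplify; try lra. apply le_INR in Hm. pose proof (pos_INR N). nra. }
  lra. Qed.

Lemma Eg_nonneg N K L u : 0 <= Eg N K L u.
Proof. unfold Eg. apply rsum_nonneg. intros. apply Rdiv_le_0_compat. apply Wr_nonneg. apply lt_0_INR; lia. Qed.

Lemma DET N L u : (1 <= N)%nat -> (16 * N <= L)%nat -> (forall i, (i < N)%nat -> (u i < L)%nat) ->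
  forall m m', (m < L)%nat -> (m' < L)%nat -> Psi N L u m' - Psi N L u m <= 2 + 2 * Eg N N L u + 70 * sqrt (INR N).
Proof. intros HN HL Hu m m' Hm Hm'. assert (HL0 : (0 < L)%nat) by lia. assert (HK : (4 * N <= L)%nat) by lia.
  assert (HL' : 0 < INR L) by (apply lt_0_INR; auto).
  destruct (argmax_ex L (Psi N L u) HL0) as [m0 [Hm0 Hmax]].
  destruct (argmin_ex L (Psi N L u) HL0) as [m1 [Hm1 Hmin]].
  set (mu := rsum L (fun m => Psi N L u m) / INR L).
  assert (Hmu1 : mu <= Psi N L u m0). { unfold mu, Rdiv. apply (Rmult_le_reg_r (INR L)); auto. rewrite Rmult_assoc, Rinv_l, Rmult_1_r by lra.
    rewrite Rmult_comm, <- rsum_const. apply rsum_le. auto. }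
  assert (Hmu2 : Psi N L u m1 <= mu). { unfold mu, Rdiv. apply (Rmult_le_reg_r (INR L)); auto. rewrite Rmult_assoc, Rinv_l, Rmult_1_r by lra.
    rewrite Rmult_comm, <- rsum_const. apply rsum_le. auto. }
  pose proof (Psi_bounds N L u m0 HL0 ltac:(lia)). pose proof (Psi_bounds N L u m1 HL0 ltac:(lia)).
  pose proof (Hmax m Hm). pose proof (Hmin m' Hm'). pose proof (Hmax m' Hm'). pose proof (Hmin m Hm).
  pose proof (Eg_nonneg N N L u).
  set (c := fun h => 2 - 2 * cos (2 * PI * INR h / INR L)).
  assert (Hc : forall h, (1 <= h)%nat -> (8 * h <= L)%nat -> 18 * (INR h / INR L) ^ 2 <= c h).
  { intros. apply c_pos; auto. }
  destruct (Rle_dec (mu - Psi N L u m1) (Psi N L u m0 - mu)).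
  - assert (Psi N L u m0 - mu <= 1 + Eg N N L u + 35 * sqrt (INR N)).
    { apply (final_arith N N L (Psi N L u m0 - mu) ((Psi N L u m0 - mu) + (mu - Psi N L u m1)) (Eg N N L u) c); auto; try lra.
      intros h Hh1 Hh2. apply (max_case N N L u m0 m1 h); auto. }
    lra.
  - assert (mu - Psi N L u m1 <= 1 + Eg N N L u + 35 * sqrt (INR N)).
    { apply (final_arith N N L (mu - Psi N L u m1) ((Psi N L u m0 - mu) + (mu - Psi N L u m1)) (Eg N N L u) c); auto; try lra.
      intros h Hh1 Hh2. apply (min_case N N L u m0 m1 h); auto. }
    lra. Qed.

Lemma hadamard_Cmod n v s k th0 :
  hadamard_mod n v s k th0 = Cmod (csum n (fun i => ex (2 * PI * (INR k * s i + INR (v i) * th0)))).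
Proof. unfold hadamard_mod, Cmod. rewrite csum_fst, csum_snd. reflexivity. Qed.

Lemma phase_zero L c d : (0 < L)%nat -> Cpow (ex (2 * PI * d / INR L)) L = RtoC 1 ->
  Cmod (Cminus (ex (2 * PI * d / INR L)) (RtoC 1)) > 0 ->
  rsum L (fun J => cos (c + d * th L 0 J)) = 0.
Proof. intros HL H1 H2. 
  assert (E : rsum L (fun J => cos (c + d * th L 0 J)) = fst (Cmult (ex c) (csum L (fun J => Cpow (ex (2 * PI * d / INR L)) J)))).
  { rewrite csum_scal, csum_fst. apply rsum_ext. intros J _. rewrite ex_pow, <- ex_add. simpl. f_equal. unfold th. 
    assert (INR L <> 0) by (apply not_0_INR; lia). field; auto. }
  rewrite E, orth; auto. simpl. ring. eapply q_neq1. apply H2. lra. Qed.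

Fixpoint nsum (n : nat) (f : nat -> nat) : nat := match n with O => O | S m => (nsum m f + f m)%nat end.
Lemma nsum_ge n f i : (i < n)%nat -> (f i <= nsum n f)%nat.
Proof. induction n; intros H; simpl. lia. destruct (Nat.eq_dec i n). subst; lia. specialize (IHn ltac:(lia)). lia. Qed.

Lemma parseval n v s : (1 <= n)%nat ->
  (forall i j : nat, (i < n)%nat -> (j < n)%nat -> v i = v j -> i = j) ->
  exists th0, sqrt (INR n) <= hadamard_mod n v s 1 th0.
Proof. intros Hn Hv. set (L := (4 * (nsum n v + 1))%nat). assert (HL : (0 < L)%nat) by (unfold L; lia).
  assert (HL' : 0 < INR L) by (apply lt_0_INR; auto).
  set (a := fun J i => 2 * PI * (INR 1 * s i + INR (v i) * (INR J / INR L))).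
  assert (Hsum : rsum L (fun J => Cmod (csum n (fun i => ex (a J i))) ^ 2) = INR L * INR n).
  { rewrite (rsum_ext _ _ (fun J => rsum n (fun i => rsum n (fun i' => cos (a J i - a J i'))))).
    2: { intros. apply Cmod_csum_ex_sq. }
    rewrite rsum_swap. rewrite Rmult_comm, <- rsum_const. apply rsum_ext. intros i Hi.
    rewrite rsum_swap. rewrite (rsum_diag _ _ i Hi).
    rewrite (rsum_ext L (fun J => cos (a J i - a J i)) (fun _ => 1)).
    2: { intros. rewrite Rminus_diag_eq, cos_0; auto. }
    rewrite (rsum_ext n _ (fun _ => 0)). rewrite !rsum_const. ring.
    intros i' Hi'. destruct (Nat.eq_dec i' i). auto.
    assert (Hd : INR (v i) <> INR (v i')). { intro E. apply INR_eq in E. apply Hv in E; auto. }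
    set (d := INR (v i) - INR (v i')).
    assert (HdL : 4 * Rabs d <= INR L). { unfold d, L. pose proof (nsum_ge n v i Hi). pose proof (nsum_ge n v i' Hi').
      rewrite mult_INR, plus_INR. simpl. apply le_INR in H. apply le_INR in H0. pose proof (pos_INR (v i)). pose proof (pos_INR (v i')).
      destruct (Rle_dec 0 (INR (v i) - INR (v i'))). rewrite Rabs_right by lra. lra. rewrite Rabs_left by lra. lra. }
    rewrite (rsum_ext L _ (fun J => cos (2 * PI * (s i - s i') + d * th L 0 J))).
    apply phase_zero; auto. unfold d. rewrite q_powL by lia. apply ex_intdiff.
    eapply Rlt_le_trans. 2: apply q_lb; auto. apply Rdiv_lt_0_compat; auto. assert (0 < Rabs d) by (apply Rabs_pos_lt; unfold d; lra). lra.
    intros J _. unfold a, th, d. f_equal. simpl. field. lra. }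
  destruct (rsum_exists_ge L (fun J => Cmod (csum n (fun i => ex (a J i))) ^ 2) (INR n) HL) as [J [_ HJ]]. lra.
  exists (INR J / INR L). rewrite hadamard_Cmod. 
  replace (csum n (fun i => ex (2 * PI * (INR 1 * s i + INR (v i) * (INR J / INR L))))) with (csum n (fun i => ex (a J i))) by auto.
  rewrite <- (sqrt_pow2 (Cmod _)) by apply Cmod_ge_0. apply sqrt_le_1_alt. auto. Qed.

Lemma ex_intZ z : ex (2 * PI * IZR z) = RtoC 1.
Proof. destruct (Z_le_gt_dec 0 z).
  - rewrite <- (Z2Nat.id z) by auto. rewrite <- INR_IZR_INZ. apply ex_int.
  - replace z with (- Z.of_nat (Z.to_nat (- z)))%Z by lia. rewrite opp_IZR, <- INR_IZR_INZ.
    rewrite <- (Cmult_1_r (ex _)). rewrite <- (ex_int (Z.to_nat (- z))) at 1.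
    replace (2 * PI * - INR (Z.to_nat (- z))) with (- (2 * PI * INR (Z.to_nat (- z)))) by ring. apply ex_neg. Qed.

Definition ufl (L : nat) (y : R) : nat := Z.to_nat (Int_part (INR L * y)).

Lemma ufl_spec L y : (0 < L)%nat -> 0 <= y < 1 ->
  INR (ufl L y) <= INR L * y < INR (ufl L y) + 1 /\ (ufl L y < L)%nat.
Proof. intros HL Hy. assert (HL' : 0 < INR L) by (apply lt_0_INR; auto).
  destruct (base_Int_part (INR L * y)) as [H1 H2].
  assert (0 <= Int_part (INR L * y))%Z. { assert (-1 < Int_part (INR L * y))%Z. apply lt_IZR. simpl. nra. lia. }
  unfold ufl. rewrite INR_IZR_INZ, Z2Nat.id by auto. split. lra.
  apply INR_lt. rewrite INR_IZR_INZ, Z2Nat.id by auto. nra. Qed.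

Lemma frac_bounds x : 0 <= fracR x < 1.
Proof. unfold fracR. destruct (base_fp x). lra. Qed.

Lemma Wr_close n L (u : nat -> nat) (y : nat -> R) k : (0 < L)%nat ->
  (forall i, (i < n)%nat -> INR (u i) <= INR L * y i < INR (u i) + 1) ->
  Wr n L u (INR k) <= Cmod (csum n (fun i => ex (2 * PI * INR k * y i))) + INR n * (2 * PI * INR k / INR L).
Proof. intros HL Hu. assert (HL' : 0 < INR L) by (apply lt_0_INR; auto). pose proof PI_gt3. unfold Wr.
  set (A := csum n (fun i => ex (INR (u i) * (2 * PI * INR k / INR L)))).
  set (B := csum n (fun i => ex (2 * PI * INR k * y i))).
  replace A with (Cplus B (csum n (fun i => Cminus (ex (INR (u i) * (2 * PI * INR k / INR L))) (ex (2 * PI * INR k * y i))))).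
  2: { unfold A, B. clear. induction n; simpl. apply ceq; simpl; ring. rewrite <- IHn. apply ceq; simpl; ring. }
  eapply Rle_trans. apply Cmod_triangle. apply Rplus_le_compat_l. eapply Rle_trans. apply Cmod_csum.
  rewrite <- rsum_const. apply rsum_le. intros i Hi. eapply Rle_trans. apply Cmod_exdiff.
  specialize (Hu i Hi). pose proof (pos_INR k).
  replace (INR (u i) * (2 * PI * INR k / INR L) - 2 * PI * INR k * y i) with ((2 * PI * INR k / INR L) * (INR (u i) - INR L * y i)) by (field; lra).
  rewrite Rabs_mult. rewrite (Rabs_right (2 * PI * INR k / INR L)). 
  2: apply Rle_ge, Rdiv_le_0_compat; nra.
  rewrite <- (Rmult_1_r (2 * PI * INR k / INR L)) at 2. apply Rmult_le_compat_l. apply Rdiv_le_0_compat; nra.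
  apply Rabs_le. lra. Qed.

Lemma Tk_le_M n v s t (M : nat -> R) k : is_lub (hadamard_mod_set n v s k) (M k) ->
  Cmod (csum n (fun i => ex (2 * PI * INR k * fracR (s i + INR (v i) * t)))) <= M k.
Proof. intros [H _]. replace (Cmod (csum n (fun i => ex (2 * PI * INR k * fracR (s i + INR (v i) * t))))) with (hadamard_mod n v s k (INR k * t)).
  apply H. exists (INR k * t). auto.
  rewrite hadamard_Cmod. f_equal. apply csum_ext. intros i _.
  set (x := s i + INR (v i) * t). pose proof (Rplus_Int_part_frac_part x). unfold fracR.
  replace (2 * PI * (INR k * s i + INR (v i) * (INR k * t))) with (2 * PI * INR k * frac_part x + 2 * PI * IZR (Z.of_nat k * Int_part x)).
  rewrite ex_add, ex_intZ, Cmult_1_r. auto. rewrite mult_IZR, <- INR_IZR_INZ. unfold x in *. 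
  transitivity (2 * PI * INR k * (IZR (Int_part (s i + INR (v i) * t)) + frac_part (s i + INR (v i) * t))). ring. rewrite <- H0. ring. Qed.

Definition indab a b y : R := if Rle_dec a y then if Rle_dec y b then 1 else 0 else 0.

Lemma count_real n r a b : INR (count_in n r a b) = rsum n (fun i => indab a b (fracR (r i))).
Proof. induction n. auto. simpl count_in. rewrite plus_INR, IHn. simpl rsum. f_equal. unfold indab.
  destruct (Rle_dec a (fracR (r n))); destruct (Rle_dec (fracR (r n)) b); simpl; auto. Qed.

Lemma indab_bounds a b y : 0 <= indab a b y <= 1.
Proof. unfold indab. destruct (Rle_dec a y); destruct (Rle_dec y b); lra. Qed.

Lemma upper_elem L a b y u A Bq : (0 < L)%nat -> 0 <= a -> a <= b -> b <= 1 ->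
  INR u <= INR L * y < INR u + 1 -> (u < L)%nat -> INR A <= INR L * a < INR A + 1 -> INR Bq <= INR L * b < INR Bq + 1 ->
  indab a b y <= (if lt_dec u (Nat.min (S Bq) L) then 1 else 0) - (if lt_dec u A then 1 else 0).
Proof. intros HL Ha Hab Hb Hy Hu HA HB. assert (HL' : 0 < INR L) by (apply lt_0_INR; auto).
  assert (HAB : (A < S Bq)%nat). { apply INR_lt. rewrite S_INR. assert (INR L * a <= INR L * b) by (apply Rmult_le_compat_l; lra). lra. }
  unfold indab. destruct (Rle_dec a y); [destruct (Rle_dec y b)|].
  - assert (INR L * a <= INR L * y) by (apply Rmult_le_compat_l; lra).
    assert (INR L * y <= INR L * b) by (apply Rmult_le_compat_l; lra).
    assert (u < S Bq)%nat. { apply INR_lt. rewrite S_INR. lra. }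
    destruct (lt_dec u (Nat.min (S Bq) L)); [|lia]. destruct (lt_dec u A). 
    apply le_INR in l0. rewrite S_INR in l0. lra. lra.
  - destruct (lt_dec u A); destruct (lt_dec u (Nat.min (S Bq) L)); try lra; lia.
  - destruct (lt_dec u A); destruct (lt_dec u (Nat.min (S Bq) L)); try lra; lia. Qed.

Lemma lower_elem L a b y u A Bq : (0 < L)%nat ->
  INR u <= INR L * y < INR u + 1 -> (u < L)%nat -> INR A <= INR L * a < INR A + 1 -> INR Bq <= INR L * b < INR Bq + 1 ->
  (if lt_dec u Bq then 1 else 0) - (if lt_dec u (Nat.min (S A) L) then 1 else 0) <= indab a b y.
Proof. intros HL Hy Hu HA HB. assert (HL' : 0 < INR L) by (apply lt_0_INR; auto). pose proof (indab_bounds a b y).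
  destruct (lt_dec u Bq); destruct (lt_dec u (Nat.min (S A) L)); try lra.
  assert (S A <= u)%nat by lia. apply le_INR in H0. rewrite S_INR in H0. apply le_INR in l. rewrite S_INR in l.
  unfold indab. destruct (Rle_dec a y) as [r1|r1]; [destruct (Rle_dec y b) as [r2|r2]|]. lra.
  exfalso. apply r2. apply (Rmult_le_reg_l (INR L)); auto; lra.
  exfalso. apply r1. apply (Rmult_le_reg_l (INR L)); auto; lra. Qed.

Lemma Psi_L N L u : (0 < L)%nat -> (forall i, (i < N)%nat -> (u i < L)%nat) -> Psi N L u L = Psi N L u 0.
Proof. intros HL Hu. assert (HL' : 0 < INR L) by (apply lt_0_INR; auto). unfold Psi, cnt.
  rewrite (rsum_ext N _ (fun _ => 1)). rewrite (rsum_ext N (fun i => if lt_dec (u i) 0 then 1 else 0) (fun _ => 0)).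
  rewrite !rsum_const. simpl. field. lra.
  intros. destruct (lt_dec (u i) 0); lia || auto.
  intros. destruct (lt_dec (u i) L); auto. specialize (Hu i H). lia. Qed.

Lemma DET' N L u : (1 <= N)%nat -> (16 * N <= L)%nat -> (forall i, (i < N)%nat -> (u i < L)%nat) ->
  forall m m', (m <= L)%nat -> (m' <= L)%nat -> Psi N L u m' - Psi N L u m <= 2 + 2 * Eg N N L u + 70 * sqrt (INR N).
Proof. intros HN HL Hu m m' Hm Hm'. assert (HL0 : (0 < L)%nat) by lia.
  assert (Hn : forall k, (k <= L)%nat -> exists k', (k' < L)%nat /\ Psi N L u k = Psi N L u k').
  { intros k Hk. destruct (Nat.eq_dec k L). exists 0%nat. split. lia. subst. apply Psi_L; auto. exists k. split; auto; lia. }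
  destruct (Hn m Hm) as [k [Hk E]]. destruct (Hn m' Hm') as [k' [Hk' E']]. rewrite E, E'. apply DET; auto. Qed.

Lemma bias_core n L (y : nat -> R) (u : nat -> nat) a b : (1 <= n)%nat -> (16 * n <= L)%nat ->
  (forall i, (i < n)%nat -> INR (u i) <= INR L * y i < INR (u i) + 1 /\ (u i < L)%nat) ->
  0 <= a -> a <= b -> b <= 1 ->
  Rabs (rsum n (fun i => indab a b (y i)) - INR n * (b - a)) <= 2 + 2 * Eg n n L u + 70 * sqrt (INR n) + 2 * INR n / INR L.
Proof. intros Hn HL Hu Ha Hab Hb. assert (HL0 : (0 < L)%nat) by lia. assert (HL' : 0 < INR L) by (apply lt_0_INR; auto).
  assert (Hu' : forall i, (i < n)%nat -> (u i < L)%nat) by (intros; apply Hu; auto).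
  destruct (nat_floor (INR L * a)) as [A HA]. nra. destruct (nat_floor (INR L * b)) as [Bq HB]. nra.
  assert (HAL : (A <= L)%nat). { apply INR_le. assert (INR L * a <= INR L) by nra. lra. }
  assert (HBL : (Bq <= L)%nat). { apply INR_le. assert (INR L * b <= INR L) by nra. lra. }
  pose proof (DET' n L u Hn HL Hu') as D.
  assert (Hn' : 0 <= INR n) by apply pos_INR.
  apply Rabs_le. split.
  - set (q := Bq). set (p := Nat.min (S A) L).
    assert (C : cnt n u q - cnt n u p <= rsum n (fun i => indab a b (y i))).
    { unfold cnt. rewrite <- rsum_minus. apply rsum_le. intros i Hi. destruct (Hu i Hi). apply (lower_elem L); auto. }
    assert (INR p <= INR A + 1) by (unfold p; rewrite <- S_INR; apply le_INR; lia).
    assert (Dp := D q p ltac:(unfold q; lia) ltac:(unfold p; lia)). unfold Psi in Dp.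
    assert (INR n * INR p / INR L - INR n * INR q / INR L <= INR n * (a - b) + 2 * INR n / INR L).
    { replace (INR n * INR p / INR L - INR n * INR q / INR L) with (INR n * (INR p - INR q) / INR L) by (field; lra).
      replace (INR n * (a - b) + 2 * INR n / INR L) with (INR n * (INR L * a - INR L * b + 2) / INR L) by (field; lra).
      unfold Rdiv. apply Rmult_le_compat_r. left; apply Rinv_0_lt_compat; lra. apply Rmult_le_compat_l; auto. unfold q. lra. }
    lra.
  - set (q := Nat.min (S Bq) L). set (p := A).
    assert (C : rsum n (fun i => indab a b (y i)) <= cnt n u q - cnt n u p).
    { unfold cnt. rewrite <- rsum_minus. apply rsum_le. intros i Hi. destruct (Hu i Hi). apply (upper_elem L); auto. }
    assert (INR q <= INR Bq + 1) by (unfold q; rewrite <- S_INR; apply le_INR; lia).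
    assert (Dp := D p q ltac:(unfold p; lia) ltac:(unfold q; lia)). unfold Psi in Dp.
    assert (INR n * INR q / INR L - INR n * INR p / INR L <= INR n * (b - a) + 2 * INR n / INR L).
    { replace (INR n * INR q / INR L - INR n * INR p / INR L) with (INR n * (INR q - INR p) / INR L) by (field; lra).
      replace (INR n * (b - a) + 2 * INR n / INR L) with (INR n * (INR L * b - INR L * a + 2) / INR L) by (field; lra).
      unfold Rdiv. apply Rmult_le_compat_r. left; apply Rinv_0_lt_compat; lra. apply Rmult_le_compat_l; auto. unfold p. lra. }
    lra. Qed.

Theorem lemma4p2 :
  exists c : R, 0 < c /\
  forall (n : nat) (v : nat -> nat) (s : nat -> R),
    (forall i j : nat, (i < n)%nat -> (j < n)%nat -> v i = v j -> i = j) ->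
    (forall i : nat, (i < n)%nat -> 0 <= s i < 1) ->
    forall (t B : R) (M : nat -> R),
      is_lub (bias_set n (fun i => s i + INR (v i) * t)) B ->
      (forall k : nat, is_lub (hadamard_mod_set n v s k) (M k)) ->
      B <= c * (1 + rsum n (fun j => M (S j) / INR (S j))).
Proof.
  exists 75. split. lra.
  intros n v s Hv Hs t B M HB HM.
  set (E := rsum n (fun j => M (S j) / INR (S j))).
  assert (HM0 : forall k, 0 <= M k).
  { intros k. destruct (HM k) as [Hub _]. apply Rle_trans with (hadamard_mod n v s k 0).
    unfold hadamard_mod; apply sqrt_pos. apply Hub. exists 0. auto. }
  assert (HE : 0 <= E) by (apply rsum_nonneg; intros; apply Rdiv_le_0_compat; auto; apply lt_0_INR; lia).
  destruct HB as [_ HB]. apply HB. intros x [a [b [Ha [Hab [Hb Hx]]]]]. subst x.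
  destruct n as [|n'].
  { simpl. rewrite Rmult_0_l, Rminus_0_r, Rabs_R0. lra. }
  set (n := S n') in *.
  set (L := (16 * (n * n + 1))%nat).
  assert (HL0 : (0 < L)%nat) by (unfold L; lia).
  assert (HL' : 0 < INR L) by (apply lt_0_INR; auto).
  set (y := fun i => fracR (s i + INR (v i) * t)).
  set (u := fun i => ufl L (y i)).
  assert (Hu : forall i, (i < n)%nat -> INR (u i) <= INR L * y i < INR (u i) + 1 /\ (u i < L)%nat).
  { intros i _. apply ufl_spec; auto. apply frac_bounds. }
  assert (Hc := bias_core n L y u a b ltac:(unfold n; lia) ltac:(unfold L; nia) Hu Ha Hab Hb).
  assert (HnL : INR n * INR n * (2 * PI) / INR L <= 1).
  { unfold L. rewrite mult_INR, plus_INR, mult_INR. pose proof PI_4. pose proof (pos_INR n).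
    apply (Rmult_le_reg_r (INR 16 * (INR n * INR n + INR 1))). simpl. nra.
    field_simplify. simpl. nra. simpl. nra. }
  assert (Hn1 : 1 <= INR n) by (unfold n; rewrite S_INR; pose proof (pos_INR n'); lra).
  assert (H2n : 2 * INR n / INR L <= 1).
  { apply (Rmult_le_reg_r (INR L)); auto. field_simplify; try lra. unfold L. rewrite mult_INR, plus_INR, mult_INR. simpl. nra. }
  assert (HEg : Eg n n L u <= E + 1).
  { unfold Eg, E. apply Rle_trans with (rsum n (fun e => M (S e) / INR (S e) + INR n * (2 * PI / INR L))).
    - apply rsum_le. intros e He. assert (HS : 0 < INR (S e)) by (apply lt_0_INR; lia).
      pose proof (Wr_close n L u y (S e) HL0 ltac:(intros; apply Hu; auto)).
      pose proof (Tk_le_M n v s t M (S e) (HM (S e))) as H0'.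
      assert (H0 : Cmod (csum n (fun i => ex (2 * PI * INR (S e) * y i))) <= M (S e)) by exact H0'.
      replace (M (S e) / INR (S e) + INR n * (2 * PI / INR L)) with ((M (S e) + INR n * (2 * PI * INR (S e) / INR L)) / INR (S e)) by (field; lra).
      unfold Rdiv. apply Rmult_le_compat_r. left; apply Rinv_0_lt_compat; auto. lra.
    - rewrite rsum_plus, rsum_const. replace (INR n * (INR n * (2 * PI / INR L))) with (INR n * INR n * (2 * PI) / INR L) by (field; lra). lra. }
  assert (Hsq : sqrt (INR n) <= E).
  { destruct (parseval n v s ltac:(unfold n; lia) Hv) as [th0 Hth].
    destruct (HM 1%nat) as [Hub _]. assert (hadamard_mod n v s 1 th0 <= M 1%nat) by (apply Hub; exists th0; auto).
    unfold E, n. rewrite rsum_shift. 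
    assert (0 <= rsum n' (fun i => M (S (S i)) / INR (S (S i)))) by (apply rsum_nonneg; intros; apply Rdiv_le_0_compat; auto; apply lt_0_INR; lia).
    simpl (INR 1). replace (M 1%nat / 1) with (M 1%nat) by field. fold n. lra. }
  assert (Hc2 : Rabs (INR (count_in n (fun i => s i + INR (v i) * t) a b) - INR n * (b - a)) <= 2 + 2 * Eg n n L u + 70 * sqrt (INR n) + 2 * INR n / INR L) by (rewrite count_real; exact Hc).
  lra.
Qed.
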